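(* Let $d\ge1$, $n\ge2$ be integers, $\kappa_d$ the volume of the $d$-dimensional unit ball, $V\ge0$, $c\in(0,\infty)$, $-d/2<\tau_1<\dots<\tau_n$ reals, $a_i=\tau_i+d$, $x_i=\tau_i+d/2$. Let $\Sigma_n^{\mathrm{sb}}$ have entries $\frac{Vd\kappa_d}{2(x_i+x_j)}$, $\Sigma_n^{\mathrm{sp}}$ entries $\frac{Vd^2\kappa_d^2}{a_ia_j}$, and $\Sigma_n=\Sigma_n^{\mathrm{sb}}+c\Sigma_n^{\mathrm{sp}}$ if $c\le1$, $\Sigma_n=\frac1c\Sigma_n^{\mathrm{sb}}+\Sigma_n^{\mathrm{sp}}$ if $c>1$. Write $\det(\Sigma_n-\lambda I_n)=(-1)^n\lambda^n+a_n^{(n-1)}\lambda^{n-1}+\dots+a_n^{(1)}\lambda+a_n^{(0)}$. For $k\in[n-1]$ and $I=\{i_1<\dots<i_{n-k}\}\subseteq[n]$ define $$D(I)=\Bigg(1+\sum_{j\in I}\frac{cd\kappa_d}{a_j}\Bigg(\frac{4x_j\prod_{m\in I\setminus\{j\}}(x_m+x_j)^2}{a_j\prod_{m\in I\setminus\{j\}}(x_m-x_j)^2}-\sum_{i\in I\setminus\{j\}}\frac{8x_ix_j(x_i+x_j)\prod_{l\in I\setminus\{i,j\},\,m\in\{i,j\}}(x_m+x_l)}{a_i(x_j-x_i)^2\prod_{l\in I\setminus\{i,j\},\,m\in\{i,j\}}(x_m-x_l)}\Bigg)\Bigg)\frac{\prod_{i<j\in I}(x_i-x_j)^2}{\prod_{i,j\in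 I}(x_i+x_j)},$$ and $D_k=\sum_{I\subseteq[n],\,|I|=n-k}D(I)$. Then $a_n^{(k)}=(-1)^kD_k\big(\frac{Vd\kappa_d}{2}\big)^{n-k}$ for $c\in(0,1]$, and $a_n^{(k)}=(-1)^kD_k\big(\frac{Vd\kappa_d}{2c}\big)^{n-k}$ for $c\in(1,\infty)$, for all $k\in[n-1]$.
   Context: $\Sigma_n$ is the asymptotic covariance matrix of normalized length power functionals in the critical regime. $[n]=\{1,\dots,n\}$. *)

(* Defs.v *)
From HB Require Import structures.
From mathcomp Require Import all_boot all_order all_algebra.
From mathcomp Require Import reals trigo.
Set Implicit Arguments. Unset Strict Implicit. Unset Printing Implicit Defensive.
Import Order.TTheory GRing.Theory Num.Theory.
Local Open Scope ring_scope.

(* volume of the d-dimensional unit ball: kappa_0 = 1, kappa_1 = 2,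
   kappa_{d+2} = 2 pi / (d+2) * kappa_d  (= pi^(d/2) / Gamma(d/2+1)) *)
Fixpoint kappa (R : realType) (d : nat) : R :=
  match d with
  | 0 => 1
  | 1 => 2
  | d'.+2 => 2 * pi / d'.+2%:R * kappa R d'
  end.

Section Defs.
Variables (R : realType) (d n : nat) (V c : R) (tau : 'I_n -> R).

Definition xx (i : 'I_n) : R := tau i + d%:R / 2.
Definition aa (i : 'I_n) : R := tau i + d%:R.

Definition Sigma_sb : 'M[R]_n :=
  \matrix_(i, j) (V * d%:R * kappa R d / (2 * (xx i + xx j))).
Definition Sigma_sp : 'M[R]_n :=
  \matrix_(i, j) (V * d%:R ^+ 2 * kappa R d ^+ 2 / (aa i * aa j)).
Definition Sigma : 'M[R]_n :=
  if c <= 1 then Sigma_sb + c *: Sigma_sp else c^-1 *: Sigma_sb + Sigma_sp.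

Definition detcoef (A : 'M[R]_n) (k : nat) : R :=
  (\det (map_mx polyC A - 'X%:M))`_k.

Definition DI (I : {set 'I_n}) : R :=
  (1 + \sum_(j in I) (c * d%:R * kappa R d / aa j) *
     (4 * xx j * (\prod_(m in I :\ j) (xx m + xx j) ^+ 2)
        / (aa j * \prod_(m in I :\ j) (xx m - xx j) ^+ 2)
      - \sum_(i in I :\ j)
          (8 * xx i * xx j * (xx i + xx j)
             * \prod_(l in I :\ i :\ j) \prod_(m in [set i; j]) (xx m + xx l))
          / (aa i * (xx j - xx i) ^+ 2
             * \prod_(l in I :\ i :\ j) \prod_(m in [set i; j]) (xx m - xx l))))
  * (\prod_(i in I) \prod_(j in I | (i < j)%N) (xx i - xx j) ^+ 2)
  / (\prod_(i in I) \prod_(j in I) (xx i + xx j)).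

Definition Dk (k : nat) : R := \sum_(I : {set 'I_n} | #|I| == (n - k)%N) DI I.

End Defs.

(* Main.v *)
Require Import Defs.
From HB Require Import structures.
From mathcomp Require Import all_boot all_order all_algebra.
From mathcomp Require Import reals trigo.
From mathcomp Require Import fingroup perm.
From mathcomp Require Import ring lra zify.
Set Implicit Arguments. Unset Strict Implicit. Unset Printing Implicit Defensive.
Import Order.TTheory GRing.Theory Num.Theory.
Local Open Scope ring_scope.
Definition RI (R : realType) n (I : {set 'I_n}) (A : 'M[R]_n) : 'M[R]_n :=
  \matrix_(i, j) if i \in I then (if j \in I then A i j else 0) else (i == j)%:R.

Lemma RI_perm (R : realType) n (I : {set 'I_n}) (A : 'M[R]_n) (s : 'S_n) :
  \prod_i RI I A i (s i) =
  if [forall i in ~: I, s i == i] then \prod_(i in I) A i (s i) else 0.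
Proof.
case: ifP => [/forall_inP fx | /forall_inP nfx].
  rewrite (bigID (mem I)) /= [X in _ * X]big1 ?mulr1.
    apply: eq_bigr => i iI; rewrite mxE iI.
    case: ifP => // siI.
    have: s i \in ~: I.
      by rewrite in_setC siI.
    move=> /fx /eqP /perm_inj sii. by move: iI; rewrite -sii siI.
  move=> i iI; rewrite mxE (negPf iI).
  have /fx /eqP -> : i \in ~: I by rewrite in_setC.
  by rewrite eqxx.
case: (pickP (fun i => (i \in ~: I) && (s i != i))) => [i /andP[iI nsi] | H];
  last by exfalso; apply: nfx => i iI; move: (H i); rewrite iI /= => /negbFE.
rewrite (bigD1 i) //= mxE.
move: iI; rewrite in_setC => /negPf ->.
by rewrite eq_sym (negPf nsi) mul0r.
Qed.

Lemma det_charE (R : realType) n (A : 'M[R]_n) :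
  \det (map_mx polyC A - 'X%:M) =
  \sum_(I : {set 'I_n}) (- 'X) ^+ #|~: I| * (\det (RI I A))%:P.
Proof.
transitivity (\sum_(s : 'S_n) (-1) ^+ s * \sum_(I : {set 'I_n})
   \prod_i (if i \in I then (A i (s i))%:P else - ('X *+ (i == s i)))).
  apply: eq_bigr => s _; congr (_ * _); rewrite -bigA_distr.
  by apply: eq_bigr => i _; rewrite !mxE.
under eq_bigr do rewrite big_distrr.
rewrite exchange_big /=; apply: eq_bigr => I _.
rewrite /determinant rmorph_sum big_distrr /=; apply: eq_bigr => s _.
rewrite rmorphM rmorph_sign /= RI_perm mulrCA; congr (_ * _).
case: ifP => [/forall_inP fx | /forall_inP nfx].
  rewrite (bigID (mem I)) /= rmorph_prod mulrC; congr (_ * _).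
    rewrite -(prodr_const (mem (~: I))); apply: eq_big => i; first by rewrite in_setC.
    move=> iI; rewrite (negPf iI).
    have /fx /eqP -> : i \in ~: I by rewrite in_setC.
    by rewrite eqxx.
  by apply: eq_bigr => i ->.
case: (pickP (fun i => (i \in ~: I) && (s i != i))) => [i /andP[iI nsi] | H];
  last by exfalso; apply: nfx => i iI; move: (H i); rewrite iI /= => /negbFE.
rewrite (bigD1 i) //=; move: iI; rewrite in_setC => /negPf ->.
by rewrite eq_sym (negPf nsi) mulr0n oppr0 mul0r polyC0 mulr0.
Qed.


Lemma detcoefE (R : realType) n (A : 'M[R]_n) k : (k <= n)%N ->
  detcoef A k = (-1) ^+ k * \sum_(I : {set 'I_n} | #|I| == (n - k)%N) \det (RI I A).
Proof.
move=> kn; rewrite /detcoef det_charE coef_sum big_distrr /= [in RHS]big_mkcond /=.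
apply: eq_bigr => I _.
rewrite coefMC (exprNn 'X) -(rmorph_sign polyC) coefCM coefXn.
have hC := cardsC I; rewrite card_ord in hC.
have hI : (#|I| <= n)%N by rewrite -[X in (_ <= X)%N](card_ord n) max_card.
have -> : #|~: I| = (n - #|I|)%N by lia.
case: ifP => /eqP h1.
  rewrite h1 subKn //.
  by rewrite eqxx mulr1.
have -> : (k == (n - #|I|)%N) = false.
  by apply/negbTE/eqP => h2; apply: h1; rewrite h2 subKn.
by rewrite mulr0 mul0r.
Qed.
Lemma RIE (R : realType) n (I : {set 'I_n}) (A : 'M[R]_n) i j :
  RI I A i j = if i \in I then (if j \in I then A i j else 0) else (i == j)%:R.
Proof. by rewrite mxE. Qed.

Lemma mulcr (R : realType) n (u v : 'cV[R]_n) i j : (u *m v^T) i j = u i 0 * v j 0.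
Proof. by rewrite mxE big_ord1 mxE. Qed.

Lemma mxBE (R : realType) m k (A C : 'M[R]_(m, k)) i j : (A - C) i j = A i j - C i j.
Proof. by rewrite !mxE. Qed.

Lemma mxDE (R : realType) m k (A C : 'M[R]_(m, k)) i j : (A + C) i j = A i j + C i j.
Proof. by rewrite !mxE. Qed.

Lemma mxNE (R : realType) m k (A : 'M[R]_(m, k)) i j : (- A) i j = - A i j.
Proof. by rewrite !mxE. Qed.

Lemma mxZE (R : realType) m k (a : R) (A : 'M[R]_(m, k)) i j : (a *: A) i j = a * A i j.
Proof. by rewrite !mxE. Qed.

Lemma det_rank1 (R : fieldType) m (w v : 'cV[R]_m) :
  \det (1%:M + w *m v^T) = 1 + (v^T *m w) 0 0.
Proof.
pose M1 := block_mx (1%:M : 'M[R]_1) (- v^T) w (1%:M : 'M[R]_m).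
have E1 : M1 = block_mx 1%:M 0 w 1%:M *m block_mx 1%:M (- v^T) 0 (1%:M + w *m v^T).
  rewrite mulmx_block !mul1mx !mulmx1 !mul0mx ?mulmx0 !addr0 ?add0r mulmxN.
  by rewrite addrCA addNr addr0.
have E2 : M1 = block_mx (1%:M + v^T *m w) (- v^T) 0 1%:M *m block_mx 1%:M 0 w 1%:M.
  rewrite mulmx_block !mul1mx !mulmx1 !mul0mx ?mulmx0 ?addr0 ?add0r mulNmx.
  by rewrite addrK.
have := congr1 determinant E1; rewrite E2 !det_mulmx. rewrite (@det_lblock _ 1 m) !(@det_ublock _ 1 m) !det1 !mul1r !mulr1 => <-.
by rewrite det_mx11 !mxE.
Qed.

Lemma det_update (R : fieldType) m (P Y : 'M[R]_m) (w v : 'cV[R]_m) :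
  P *m Y = 1%:M ->
  \det (P + w *m v^T) = \det P * (1 + (v^T *m (Y *m w)) 0 0).
Proof.
move=> PY.
have -> : P + w *m v^T = P *m (1%:M + (Y *m w) *m v^T).
  by rewrite mulmxDr mulmx1 !mulmxA PY mul1mx.
by rewrite det_mulmx det_rank1.
Qed.
Ltac fnz := repeat (apply/andP; split); assumption.

Section Core.
Variables (R : realType) (n : nat) (x : 'I_n -> R).
Hypothesis xpos : forall i, 0 < x i.
Hypothesis xinj : injective x.

Definition Aco (I : {set 'I_n}) j :=
  \prod_(l in I) (x j + x l) / \prod_(l in I :\ j) (x j - x l).
Definition Pf (I : {set 'I_n}) t := \prod_(l in I) ((t - x l) / (t + x l)).

Lemma xD_neq0 i j : x i + x j != 0.
Proof. by rewrite gt_eqF // addr_gt0. Qed.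

Lemma xB_neq0 i j : i != j -> x i - x j != 0.
Proof. by move=> ij; rewrite subr_eq0; apply: contra ij => /eqP /xinj ->. Qed.

Lemma prodB_neq0 (S : {set 'I_n}) j : j \notin S -> \prod_(l in S) (x j - x l) != 0.
Proof.
move=> jS; apply/prodf_neq0 => l lS; apply: xB_neq0.
by apply: contraNneq jS => ->.
Qed.

Lemma prodD_neq0 (S : {set 'I_n}) j : \prod_(l in S) (x j + x l) != 0.
Proof. by apply/prodf_neq0 => l _; apply: xD_neq0. Qed.

Lemma Pf_split (I : {set 'I_n}) t : Pf I t = \prod_(l in I) (t - x l) / \prod_(l in I) (t + x l).
Proof. by rewrite /Pf big_split /= prodfV. Qed.

Lemma Pf_neq0 (I : {set 'I_n}) j : j \notin I -> Pf I (x j) != 0.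
Proof.
move=> jI; rewrite Pf_split mulf_neq0 ?invr_eq0 ?prodB_neq0 ?prodD_neq0 //.
Qed.

Lemma Pf_U p (I : {set 'I_n}) t : p \notin I -> Pf (p |: I) t = (t - x p) / (t + x p) * Pf I t.
Proof. by move=> pI; rewrite /Pf big_setU1. Qed.

Lemma Pf_in (I : {set 'I_n}) i : i \in I -> Pf I (x i) = 0.
Proof. by move=> iI; rewrite /Pf (bigD1 i) //= subrr mul0r mul0r. Qed.

Lemma Pf_neg p (I : {set 'I_n}) : Pf I (- x p) = (Pf I (x p))^-1.
Proof.
rewrite /Pf -prodfV; apply: eq_bigr => l _; rewrite invf_div.
by rewrite -opprD [- x p + _]addrC -opprB invrN mulrNN.
Qed.

Lemma AcoU p (I : {set 'I_n}) j : p \notin I -> j \in I ->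
  Aco (p |: I) j = Aco I j * (x j + x p) / (x j - x p).
Proof.
move=> pI jI; have jp : j != p by apply: contraNneq pI => <-.
rewrite /Aco.
have -> : (p |: I) :\ j = p |: (I :\ j).
  by apply/setP => l; rewrite !inE; case: (l =P j) => // ->; rewrite (negPf jp).
rewrite big_setU1 // big_setU1 ?inE ?(negPf pI) ?andbF //.
have h1 := xB_neq0 jp.
have h2 : \prod_(l in I :\ j) (x j - x l) != 0 by rewrite prodB_neq0 // !inE eqxx.
rewrite /=. field; fnz.
Qed.

Lemma AcoP p (I : {set 'I_n}) : p \notin I ->
  Aco (p |: I) p = 2 * x p / Pf I (x p).
Proof.
move=> pI; rewrite /Aco setU1K // big_setU1 //= Pf_split.
have h1 := prodB_neq0 pI.
have h2 := prodD_neq0 I p.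
field; fnz.
Qed.

Lemma gid_k k (I : {set 'I_n}) : #|I| = k -> forall t, (forall l, l \in I -> t + x l != 0) ->
  \sum_(j in I) Aco I j / (t + x j) = 1 - Pf I t.
Proof.
elim: k I => [|k IH] I cI t ht.
  move/cards0_eq: cI => ->; by rewrite big_set0 /Pf big_set0 subrr.
have [p pI] : exists p, p \in I.
  by apply/set0Pn; rewrite -card_gt0 cI.
have eI : I = p |: (I :\ p) by rewrite setD1K.
have cI' : #|I :\ p| = k by move: cI; rewrite (cardsD1 p) pI add1n => -[].
have pI' : p \notin I :\ p by rewrite !inE eqxx.
move: ht; rewrite eI; move: (I :\ p) pI' cI' => J pJ cJ ht.
rewrite big_setU1 //= AcoP // Pf_U //.
have htp : t + x p != 0 by apply: ht; rewrite !inE eqxx.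
have htJ : forall l, l \in J -> t + x l != 0.
  by move=> l lJ; apply: ht; rewrite !inE lJ orbT.
have hpJ : forall l, l \in J -> - x p + x l != 0.
  move=> l lJ; rewrite addrC; apply: xB_neq0.
  by apply: contraNneq pJ => <-.
pose al := 2 * x p / (t + x p); pose be := (t - x p) / (t + x p).
have E : \sum_(j in J) Aco (p |: J) j / (t + x j) =
   al * \sum_(j in J) Aco J j / (- x p + x j) + be * \sum_(j in J) Aco J j / (t + x j).
  rewrite !big_distrr -big_split /=; apply: eq_bigr => j jJ.
  rewrite AcoU //.
  have h1 := htJ j jJ; have h2 := hpJ j jJ.
  have h3 : x j - x p != 0 by rewrite addrC.
  rewrite /al /be; field; fnz.
rewrite E (IH J cJ _ htJ) (IH J cJ _ hpJ) Pf_neg.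
have hG := Pf_neq0 pJ.
rewrite /al /be; field; fnz.
Qed.

Lemma gid (I : {set 'I_n}) t : (forall l, l \in I -> t + x l != 0) ->
  \sum_(j in I) Aco I j / (t + x j) = 1 - Pf I t.
Proof. exact: gid_k. Qed.

Lemma Aco_neq0 (I : {set 'I_n}) j : Aco I j != 0.
Proof.
by rewrite /Aco mulf_neq0 ?invr_eq0 ?prodD_neq0 ?prodB_neq0 // !inE eqxx.
Qed.

Lemma hid2 (I : {set 'I_n}) i : i \in I ->
  \sum_(j in I) Aco I j / (x i + x j) ^+ 2 = (Aco I i)^-1.
Proof.
move=> iI.
have eI : I = i |: (I :\ i) by rewrite setD1K.
have iJ : i \notin I :\ i by rewrite !inE eqxx.
rewrite eI; move: (I :\ i) iJ => J iJ.
rewrite big_setU1 //= AcoP //.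
have hJ1 : forall l, l \in J -> x i + x l != 0 by move=> l _; apply: xD_neq0.
have hJ2 : forall l, l \in J -> - x i + x l != 0.
  move=> l lJ; rewrite addrC; apply: xB_neq0.
  by apply: contraNneq iJ => <-.
have E : \sum_(j in J) Aco (i |: J) j / (x i + x j) ^+ 2 =
  (2 * x i)^-1 * (\sum_(j in J) Aco J j / (- x i + x j) - \sum_(j in J) Aco J j / (x i + x j)).
  rewrite -sumrB big_distrr /=; apply: eq_bigr => j jJ.
  rewrite AcoU //.
  have h1 := hJ1 j jJ; have h2 := hJ2 j jJ.
  have h3 : x j - x i != 0 by rewrite addrC.
  have h4 : x j + x i != 0 by apply: xD_neq0.
  have h5 : x i != 0 by rewrite gt_eqF.
  field; fnz.
rewrite E (gid hJ1) (gid hJ2) Pf_neg.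
have hG := Pf_neq0 iJ.
have h5 : x i != 0 by rewrite gt_eqF.
have h6 : x i + x i != 0 by apply: xD_neq0.
field; fnz.
Qed.

Definition Xm (I : {set 'I_n}) j k := Aco I j * Aco I k / (x j + x k).

Lemma Cinv (I : {set 'I_n}) i k : i \in I -> k \in I ->
  \sum_(j in I) (x i + x j)^-1 * Xm I j k = (i == k)%:R.
Proof.
move=> iI kI; case: (eqVneq i k) => [<- | ik].
  have hA := Aco_neq0 I i.
  rewrite -[RHS](divff hA) -(hid2 iI) big_distrr /=.
  apply: eq_bigr => j _; rewrite /Xm.
  have h := xD_neq0 i j; have h' := xD_neq0 j i.
  field; fnz.
have hk : x k - x i != 0 by apply: xB_neq0; rewrite eq_sym.
have hI1 : forall l, l \in I -> x i + x l != 0 by move=> l _; apply: xD_neq0.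
have hI2 : forall l, l \in I -> x k + x l != 0 by move=> l _; apply: xD_neq0.
transitivity (Aco I k / (x k - x i) * (\sum_(j in I) Aco I j / (x i + x j) - \sum_(j in I) Aco I j / (x k + x j))).
  rewrite -sumrB big_distrr /=; apply: eq_bigr => j _; rewrite /Xm.
  have h1 := xD_neq0 i j; have h2 := xD_neq0 j k; have h3 := xD_neq0 k j.
  field; fnz.
by rewrite (gid hI1) (gid hI2) !Pf_in // subrr mulr0.
Qed.


Lemma sum_delta (i : 'I_n) (F : 'I_n -> R) : \sum_j (i == j)%:R * F j = F i.
Proof.
rewrite (bigD1 i) //= eqxx mul1r big1 ?addr0 // => j ji.
by rewrite eq_sym (negPf ji) mul0r.
Qed.

Definition Cm : 'M[R]_n := \matrix_(i, j) (x i + x j)^-1.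
Definition XM (I : {set 'I_n}) : 'M[R]_n := \matrix_(j, k) Xm I j k.

Lemma RIinv (I : {set 'I_n}) : RI I Cm *m RI I (XM I) = 1%:M.
Proof.
apply/matrixP => i k; rewrite !mxE.
case: (boolP (i \in I)) => iI.
  under eq_bigr => j _ do rewrite !mxE iI.
  rewrite (bigID (mem I)) /= [X in _ + X]big1 ?addr0; last first.
    by move=> j /negPf ->; rewrite mul0r.
  case: (boolP (k \in I)) => kI.
    rewrite -(Cinv iI kI); apply: eq_bigr => j jI.
    by rewrite jI.
  rewrite big1; last by move=> j jI; rewrite jI mulr0.
  by case: (i =P k) => // ik; move: kI; rewrite -ik iI.
under eq_bigr => j _ do rewrite !mxE (negPf iI).
by rewrite sum_delta (negPf iI).
Qed.

Lemma schur_step (J : {set 'I_n}) p : p \notin J ->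
  \det (RI (p |: J) Cm) = \det (RI J Cm) *
    ((x p + x p)^-1 - \sum_(k in J) (x p + x k)^-1 * \sum_(l in J) Xm J k l * (x l + x p)^-1).
Proof.
move=> pJ.
set B := RI (p |: J) Cm; set B' := RI J Cm; set Y := RI J (XM J).
have BY : B' *m Y = 1%:M := RIinv J.
pose b : 'cV[R]_n := \col_i (if i \in J then (x i + x p)^-1 else 0).
pose ep : 'cV[R]_n := \col_i (i == p)%:R.
have Yb : forall k, (Y *m b) k 0 =
    if k \in J then \sum_(l in J) Xm J k l * (x l + x p)^-1 else 0.
  move=> k; rewrite mxE; case: (boolP (k \in J)) => kJ.
    under eq_bigr => l _ do rewrite RIE kJ mxE.
    rewrite (bigID (mem J)) /= [X in _ + X]big1 ?addr0; last first.
      by move=> l /negPf ->; rewrite mul0r.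
    by apply: eq_bigr => l lJ; rewrite lJ /b mxE lJ.
  under eq_bigr => l _ do rewrite RIE (negPf kJ).
  by rewrite sum_delta mxE (negPf kJ).
have Ybp : (Y *m b) p 0 = 0 by rewrite Yb (negPf pJ).
have BB' : forall i k, i != p -> k != p -> B i k = B' i k.
  by move=> i k ip kp; rewrite !RIE !in_setU1 (negPf ip) (negPf kp).
have BYb : forall i, i != p -> (B *m (Y *m b)) i 0 = b i 0.
  move=> i ip; transitivity ((B' *m (Y *m b)) i 0); last by rewrite mulmxA BY mul1mx.
  rewrite [in LHS]mxE [in RHS]mxE; apply: eq_bigr => k _.
  case: (eqVneq k p) => [-> | kp]; first by rewrite Ybp !mulr0.
  by rewrite BB'.
set sig := B p p - (B *m (Y *m b)) p 0.
pose q : 'cV[R]_n := \col_j (if j == p then sig - 1 else B p j).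
have B'pp : B' p p = 1 by rewrite RIE (negPf pJ) eqxx.
have B'pj : forall j, j != p -> B' p j = 0.
  by move=> j jp; rewrite RIE (negPf pJ) eq_sym (negPf jp).
have B'ip : forall i, i != p -> B' i p = 0.
  by move=> i ip; rewrite RIE (negPf pJ) (negPf ip); case: ifP.
have BZ : B *m (1%:M + (- (Y *m b)) *m ep^T) = B' + ep *m q^T.
  apply/matrixP => i j.
  rewrite mulmxDr mulmx1 mulNmx mulmxN mulmxA  mxBE mxDE !mulcr.
  rewrite ![ep _ 0]mxE ![q _ 0]mxE.
  case: (eqVneq i p) => [-> | ip]; case: (eqVneq j p) => [-> | jp].
  - rewrite /= ?mulr0n ?mulr1n B'pp /sig; ring.
  - by rewrite /= ?mulr0n ?mulr1n (B'pj _ jp) mulr0 subr0 mul1r add0r.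
  - rewrite /= ?mulr0n ?mulr1n (B'ip _ ip) BYb // mul0r addr0 mulr1 mxE.
    rewrite /b /Cm !mxE !in_setU1 eqxx (negPf ip) /=.
    by case: (i \in J); rewrite ?subrr // (negPf ip) ?mulr0n subrr.
  - by rewrite /= ?mulr0n ?mulr1n mulr0 mul0r subr0 addr0 BB'.
have detZ : \det (1%:M + (- (Y *m b)) *m ep^T) = 1.
  rewrite det_rank1 mxE (bigD1 p) //= big1 ?addr0 => [|k kp].
    by rewrite mxNE Ybp oppr0 mulr0 addr0.
  by rewrite !mxE (negPf kp) mul0r.
have := congr1 determinant BZ; rewrite det_mulmx detZ mulr1 => ->.
rewrite (det_update _ _ BY).
have -> : (q^T *m (Y *m ep)) 0 0 = sig - 1.
  have -> : Y *m ep = ep.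
    apply/matrixP => i j; rewrite [LHS]mxE (bigD1 p) //= big1 ?addr0; last first.
      by move=> k kp; rewrite /ep !mxE (negPf kp) mulr0.
    rewrite /ep !mxE eqxx mulr1 (negPf pJ).
    case: (boolP (i \in J)) => // iJ.
    by case: (eqVneq i p) iJ => [->|//]; rewrite (negPf pJ).
  rewrite mxE (bigD1 p) //= !mxE eqxx mulr1 big1 ?addr0 //.
  by move=> k kp; rewrite !mxE (negPf kp) mulr0.
rewrite addrC subrK; congr (_ * _).
rewrite /sig RIE setU11 {1}/Cm mxE; congr (_ - _).
rewrite [LHS]mxE; under eq_bigr => k _ do rewrite Yb.
rewrite (bigID (mem J)) /= [X in _ + X]big1 ?addr0; last first.
  by move=> k /negPf ->; rewrite mulr0.
apply: eq_bigr => k kJ; rewrite kJ RIE setU11 in_setU1 kJ orbT mxE.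
by [].
Qed.

Lemma sig_val (J : {set 'I_n}) p : p \notin J ->
  (x p + x p)^-1 - \sum_(k in J) (x p + x k)^-1 * \sum_(l in J) Xm J k l * (x l + x p)^-1
  = (Pf J (x p)) ^+ 2 / (x p + x p).
Proof.
move=> pJ.
set G := Pf J (x p).
have hG : G != 0 by apply: Pf_neq0.
have hpk : forall k, k \in J -> x p - x k != 0.
  by move=> k kJ; apply: xB_neq0; apply: contraNneq pJ => ->.
have hJ1 : forall l, l \in J -> x p + x l != 0 by move=> l _; apply: xD_neq0.
have hJ2 : forall l, l \in J -> - x p + x l != 0.
  by move=> l lJ; rewrite addrC -opprB oppr_eq0 hpk.
have inner : forall k, k \in J ->
    \sum_(l in J) Xm J k l * (x l + x p)^-1 = Aco J k / (x p - x k) * G.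
  move=> k kJ.
  have hJk : forall l, l \in J -> x k + x l != 0 by move=> l _; apply: xD_neq0.
  transitivity (Aco J k / (x p - x k) *
     (\sum_(l in J) Aco J l / (x k + x l) - \sum_(l in J) Aco J l / (x p + x l))).
    rewrite -sumrB big_distrr /=; apply: eq_bigr => l lJ; rewrite /Xm.
    have h1 := xD_neq0 k l; have h2 := xD_neq0 l p; have h3 := xD_neq0 p l.
    have h4 := hpk k kJ.
    field; fnz.
  rewrite (gid hJk) (gid hJ1) Pf_in //; congr (_ * _); rewrite /G; ring.
under eq_bigr => k kJ do rewrite inner //.
transitivity ((x p + x p)^-1 - G / (x p + x p) *
   (\sum_(k in J) Aco J k / (x p + x k) - \sum_(k in J) Aco J k / (- x p + x k))).
  congr (_ - _); rewrite -sumrB big_distrr /=; apply: eq_bigr => k kJ.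
  have h1 := xD_neq0 p k; have h2 := hpk k kJ; have h3 := hJ2 k kJ.
  have h4 := xD_neq0 p p.
  field; fnz.
rewrite (gid hJ1) (gid hJ2) Pf_neg -/G.
have h4 := xD_neq0 p p.
field; fnz.
Qed.

Definition Cau (I : {set 'I_n}) : R :=
  (\prod_(i in I) \prod_(j in I | (i < j)%N) (x i - x j) ^+ 2)
  / (\prod_(i in I) \prod_(j in I) (x i + x j)).

Lemma NU (J : {set 'I_n}) p : p \notin J ->
  \prod_(i in p |: J) \prod_(j in p |: J | (i < j)%N) (x i - x j) ^+ 2 =
  \prod_(i in J) \prod_(j in J | (i < j)%N) (x i - x j) ^+ 2 *
  \prod_(l in J) (x p - x l) ^+ 2.
Proof.
move=> pJ.
under eq_bigr => i _ do rewrite big_mkcondr /= big_setU1 //=.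
rewrite big_setU1 //= ltnn mul1r big_split /= mulrA mulrC; congr (_ * _).
  by apply: eq_bigr => i _; rewrite -big_mkcondr.
rewrite -big_split /=; apply: eq_bigr => l lJ.
have lp : l != p by apply: contraNneq pJ => <-.
case: (ltngtP l p) => [lp' | pl | /val_inj e]; last by rewrite e eqxx in lp.
  by rewrite mul1r -sqrrN opprB.
by rewrite mulr1.
Qed.

Lemma DU (J : {set 'I_n}) p : p \notin J ->
  \prod_(i in p |: J) \prod_(j in p |: J) (x i + x j) =
  \prod_(i in J) \prod_(j in J) (x i + x j) *
  ((x p + x p) * (\prod_(l in J) (x p + x l)) ^+ 2).
Proof.
move=> pJ.
under eq_bigr => i _ do rewrite big_setU1 //=.
rewrite big_setU1 //= big_split /= expr2.
have -> : \prod_(i in J) (x i + x p) = \prod_(l in J) (x p + x l).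
  by apply: eq_bigr => i _; rewrite addrC.
ring.
Qed.

Lemma Cau_U (J : {set 'I_n}) p : p \notin J ->
  Cau (p |: J) = Cau J * ((Pf J (x p)) ^+ 2 / (x p + x p)).
Proof.
move=> pJ; rewrite /Cau NU // DU // Pf_split.
have h1 : \prod_(i in J) \prod_(j in J) (x i + x j) != 0.
  by apply/prodf_neq0 => i _; apply: prodD_neq0.
have h2 := prodD_neq0 J p.
have h3 := xD_neq0 p p.
rewrite !prodrXl; field; fnz.
Qed.

Lemma detCau_k k (I : {set 'I_n}) : #|I| = k -> \det (RI I Cm) = Cau I.
Proof.
elim: k I => [|k IH] I cI.
  move/cards0_eq: cI => ->.
  have -> : RI set0 Cm = 1%:M by apply/matrixP => i j; rewrite !mxE in_set0.
  by rewrite det1 /Cau !big_set0 divr1.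
have [p pI] : exists p, p \in I.
  by apply/set0Pn; rewrite -card_gt0 cI.
have eI : I = p |: (I :\ p) by rewrite setD1K.
have cI' : #|I :\ p| = k by move: cI; rewrite (cardsD1 p) pI add1n => -[].
have pI' : p \notin I :\ p by rewrite !inE eqxx.
rewrite eI; move: (I :\ p) pI' cI' => J pJ cJ.
by rewrite schur_step // sig_val // IH // Cau_U.
Qed.

Lemma detCau (I : {set 'I_n}) : \det (RI I Cm) = Cau I.
Proof. exact: detCau_k. Qed.

Lemma core_det (I : {set 'I_n}) (u : 'I_n -> R) (s : R) :
  \det (RI I (Cm + s *: \matrix_(i, j) (u i * u j))) =
  (1 + s * \sum_(j in I) u j * \sum_(i in I) Xm I j i * u i) * Cau I.
Proof.
pose vI : 'cV[R]_n := \col_i (if i \in I then u i else 0).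
have -> : RI I (Cm + s *: \matrix_(i, j) (u i * u j)) = RI I Cm + (s *: vI) *m vI^T.
  apply/matrixP => i j; rewrite mxDE mulcr !mxE.
  by case: (i \in I); case: (j \in I); rewrite ?mulr0 ?mul0r ?addr0 // mulrA.
rewrite (det_update _ _ (RIinv I)) detCau mulrC; congr (_ * _); congr (_ + _).
rewrite mxE (bigID (mem I)) /= [X in _ + X]big1 ?addr0; last first.
  by move=> j /negPf jI; rewrite !mxE jI mul0r.
rewrite big_distrr /=; apply: eq_bigr => j jI.
rewrite !mxE jI mulrCA; congr (_ * _).
rewrite (bigID (mem I)) /= [X in _ + X]big1 ?addr0; last first.
  by move=> i /negPf iI; rewrite !mxE iI !mulr0.
rewrite big_distrr /=; apply: eq_bigr => i iI.
by rewrite RIE jI iI /vI !mxE iI; ring.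
Qed.

Lemma Aco_diag (I : {set 'I_n}) j : j \in I ->
  Aco I j = (x j + x j) * \prod_(l in I :\ j) (x j + x l) / \prod_(l in I :\ j) (x j - x l).
Proof. by move=> jI; rewrite /Aco (big_setD1 j). Qed.

Lemma Aco_split2 (I : {set 'I_n}) i j : i \in I -> j \in I -> i != j ->
  Aco I j = (x j + x j) * (x j + x i) * \prod_(l in I :\ i :\ j) (x j + x l)
            / ((x j - x i) * \prod_(l in I :\ i :\ j) (x j - x l)).
Proof.
move=> iI jI ij.
have iIj : i \in I :\ j by rewrite !inE ij.
have e : I :\ j :\ i = I :\ i :\ j.
  by apply/setP => l; rewrite !inE andbCA.
rewrite /Aco (big_setD1 j) //= (big_setD1 i iIj) //= (big_setD1 i (A := I :\ j)) //= e.
by rewrite mulrA.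
Qed.

Lemma prod_pair (i j : 'I_n) (f : 'I_n -> R) : i != j ->
  \prod_(m in [set i; j]) f m = f i * f j.
Proof.
by move=> ij; rewrite big_setU1 ?big_set1 // inE.
Qed.

Lemma DI_generic (I : {set 'I_n}) (a : 'I_n -> R) (K : R) :
  (forall i, a i != 0) ->
  \sum_(j in I) (K / a j) *
     (4 * x j * (\prod_(m in I :\ j) (x m + x j) ^+ 2)
        / (a j * \prod_(m in I :\ j) (x m - x j) ^+ 2)
      - \sum_(i in I :\ j)
          (8 * x i * x j * (x i + x j)
             * \prod_(l in I :\ i :\ j) \prod_(m in [set i; j]) (x m + x l))
          / (a i * (x j - x i) ^+ 2
             * \prod_(l in I :\ i :\ j) \prod_(m in [set i; j]) (x m - x l)))
  = (2 * K) * \sum_(j in I) (a j)^-1 * \sum_(i in I) Xm I j i * (a i)^-1.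
Proof.
move=> ha; rewrite big_distrr /=; apply: eq_bigr => j jI.
rewrite (big_setD1 j jI) /=.
have E2 : \sum_(i in I :\ j)
          (8 * x i * x j * (x i + x j)
             * \prod_(l in I :\ i :\ j) \prod_(m in [set i; j]) (x m + x l))
          / (a i * (x j - x i) ^+ 2
             * \prod_(l in I :\ i :\ j) \prod_(m in [set i; j]) (x m - x l))
   = - 2 * \sum_(i in I :\ j) Xm I j i * (a i)^-1.
  rewrite big_distrr /=; apply: eq_bigr => i; rewrite !inE => /andP[ij iI].
  have ji : j != i by rewrite eq_sym.
  under eq_bigr => l _ do rewrite prod_pair //.
  under [X in _ / (_ * X)]eq_bigr => l _ do rewrite prod_pair //.
  rewrite !big_split /= /Xm (Aco_split2 iI jI ij) (Aco_split2 jI iI ji).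
  have e : I :\ j :\ i = I :\ i :\ j by apply/setP => l; rewrite !inE andbCA.
  rewrite e.
  have h1 : \prod_(l in I :\ i :\ j) (x i - x l) != 0 by rewrite prodB_neq0 // !inE eqxx andbF.
  have h2 : \prod_(l in I :\ i :\ j) (x j - x l) != 0 by rewrite prodB_neq0 // !inE eqxx.
  have h3 := xB_neq0 ij; have h4 := xB_neq0 ji; have h5 := ha i.
  have h6 := xD_neq0 i j; have h7 := xD_neq0 j i; have h8 := xD_neq0 i i.
  have h9 := xD_neq0 j j.
  field; fnz.
rewrite E2; set S := \sum_(i in I :\ j) _; rewrite /Xm (Aco_diag jI).
have h1 : \prod_(l in I :\ j) (x j - x l) != 0 by rewrite prodB_neq0 // !inE eqxx.
have e1 : \prod_(m in I :\ j) (x m + x j) ^+ 2 = (\prod_(l in I :\ j) (x j + x l)) ^+ 2.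
  by rewrite -prodrXl; apply: eq_bigr => m _; rewrite addrC.
have e2 : \prod_(m in I :\ j) (x m - x j) ^+ 2 = (\prod_(l in I :\ j) (x j - x l)) ^+ 2.
  by rewrite -prodrXl; apply: eq_bigr => m _; rewrite -sqrrN opprB.
rewrite e1 e2.
have h5 := ha j; have h9 := xD_neq0 j j.
field; fnz.
Qed.
End Core.

Lemma RI_scale (R : realType) n (I : {set 'I_n}) (mu : R) (M : 'M[R]_n) :
  \det (RI I (mu *: M)) = mu ^+ #|I| * \det (RI I M).
Proof.
have -> : RI I (mu *: M) = diag_mx (\row_i (if i \in I then mu else 1)) *m RI I M.
  apply/matrixP => i j; rewrite mul_diag_mx !mxE.
  by case: (i \in I); case: (j \in I); rewrite ?mulr0 ?mul1r.
rewrite det_mulmx det_diag; congr (_ * _).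
under eq_bigr => i _ do rewrite mxE.
by rewrite -big_mkcond /= prodr_const.
Qed.

Theorem corollary7p5 (R : realType) (d n : nat) (V c : R) (tau : 'I_n -> R) :
  (1 <= d)%N -> (2 <= n)%N -> 0 <= V -> 0 < c ->
  (forall i, - (d%:R / 2) < tau i) ->
  (forall i j : 'I_n, (i < j)%N -> tau i < tau j) ->
  forall k : nat, (0 < k)%N -> (k < n)%N ->
    (c <= 1 -> detcoef (Sigma d V c tau) k
               = (-1) ^+ k * Dk d c tau k * (V * d%:R * kappa R d / 2) ^+ (n - k)) /\
    (1 < c -> detcoef (Sigma d V c tau) k
               = (-1) ^+ k * Dk d c tau k * (V * d%:R * kappa R d / (2 * c)) ^+ (n - k)).
Proof.
move=> d1 n2 V0 c0 htau hmono k k0 kn.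
have d0 : 0 < d%:R :> R by rewrite ltr0n.
have hxpos : forall i, 0 < xx d tau i.
  by move=> i; rewrite /xx; have := htau i; lra.
have hinj : injective (xx d tau).
  move=> i j; rewrite /xx => e.
  case: (ltngtP i j) => [h|h|/val_inj //]; exfalso; have := hmono _ _ h; lra.
have ha : forall i, aa d tau i != 0.
  by move=> i; rewrite /aa gt_eqF //; have := htau i; lra.
have hc : c != 0 by rewrite gt_eqF.
pose K := c * d%:R * kappa R d.
pose s := 2 * K.
pose u := fun i => (aa d tau i)^-1.
pose UU : 'M[R]_n := \matrix_(i, j) (u i * u j).
have key : forall mu, Sigma d V c tau = mu *: (Cm (xx d tau) + s *: UU) ->
    detcoef (Sigma d V c tau) k = (-1) ^+ k * Dk d c tau k * mu ^+ (n - k).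
  move=> mu eS; rewrite (detcoefE _ (ltnW kn)) -mulrA; congr (_ * _).
  rewrite /Dk big_distrl /=; apply: eq_bigr => I /eqP cI.
  rewrite eS RI_scale cI mulrC; congr (_ * _).
  rewrite (core_det hxpos hinj) /DI.
  rewrite (@DI_generic R n (xx d tau) hxpos hinj I (aa d tau) K ha).
  by rewrite /Cau mulrA.
split => hc1; apply: key; apply/matrixP => i j.
- rewrite /Sigma ifT // mxDE !mxZE mxDE mxZE /Sigma_sb /Sigma_sp /Cm /UU /u /s /K !mxE.
  have h1 := xD_neq0 hxpos i j; have h2 := ha i; have h3 := ha j.
  move: h1 h2 h3; move: (xx d tau i) (xx d tau j) (aa d tau i) (aa d tau j) (kappa R d).
  move=> X Y A B kp h1 h2 h3.
  field; fnz.
- rewrite /Sigma ifF; last by apply/negbTE; rewrite -ltNge.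
  rewrite mxDE !mxZE mxDE mxZE /Sigma_sb /Sigma_sp /Cm /UU /u /s /K !mxE.
  have h1 := xD_neq0 hxpos i j; have h2 := ha i; have h3 := ha j.
  move: h1 h2 h3; move: (xx d tau i) (xx d tau j) (aa d tau i) (aa d tau j) (kappa R d).
  move=> X Y A B kp h1 h2 h3.
  field; fnz.
Qed.
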